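(* Fix a partition $[n]=U\sqcup D$ and the associated map $\eta$ from $S_n$ to triangulations of the polygon $Q$ described below. Then the fibers of $\eta$ are exactly the congruence classes of a lattice congruence on the weak order on $S_n$.
   Context: $S_n$ is the set of permutations of $[n]=\{1,\dots,n\}$ in one-line notation $x=x_1\cdots x_n$. The weak order: $x\le y$ iff $I(x)\subseteq I(y)$ where $I(x)=\{(x_j,x_i): i<j,\ x_i>x_j\}$; it is a lattice. Let $Q$ be a convex polygon in $\mathbb R^2$ with vertices $v_0,v_1,\dots,v_{n+1}$ whose $x$-coordinates strictly increase with the index, with $v_0,v_{n+1}$ on the $x$-axis, such that $v_i$ has positive $y$-coordinate for $i\in U$ (''up indices'') and negative $y$-coordinate for $i\in D$ (''down indices''). A diagonal is a segment joining two non-adjacent vertices; a triangulation is a maximal set of pairwise non-crossing diagonals. For $x\in S_n$ define polygonal paths $\lambda_0(x),\dots,\lambda_n(x)$ from $v_0$ to $v_{n+1}$, each visiting its vertices in increasing order of index: $\lambda_0(x)$ visits $v_0$, the $v_i$ with $i\in D$, and $v_{n+1}$; for $i\ge1$, $\lambda_i(x)$ is obtained from $\lambda_{i-1}(x)$ by deleting the vertex $v_{x_i}$ if $x_i\in D$ and by adding the vertex $v_{x_i}$ if $x_i\in U$. Then $\eta(x)$ is the triangulation of $Q$ consisting of all diagonals of $Q$ that occur as edges of some $\lambda_i(x)$. A lattice congruence is an equivalence relation compatible with meets and joins. *)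

(* Defs.v *)
From mathcomp Require Import all_boot fingroup perm.
Set Implicit Arguments. Unset Strict Implicit. Unset Printing Implicit Defensive.

(* Conventions: [n] = {1..n} is represented by 'I_n, the element k of [n]
   being the ordinal of value k-1.  A permutation x in S_n is a
   {perm 'I_n}; its one-line notation is x_1 ... x_n with x_{i} = x (i-1).
   The polygon vertices v_0, ..., v_{n+1} are represented by 'I_n.+2
   (vertex v_j by the ordinal of value j). *)

Section Defs.
Variable n : nat.

Definition inv_set (x : {perm 'I_n}) : {set 'I_n * 'I_n} :=
  [set (x j, x i) | i in [set: 'I_n], j in [set: 'I_n] & (i < j) && (x j < x i)].

Definition weak_le (x y : {perm 'I_n}) : bool := inv_set x \subset inv_set y.

Definition vtx (k : 'I_n) : 'I_n.+2 := inord k.+1.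
Definition v0 : 'I_n.+2 := ord0.
Definition vlast : 'I_n.+2 := ord_max.

Variable D : {set 'I_n}.
Definition U : {set 'I_n} := ~: D.

(* a and b are consecutive vertices (a < b) of the path through the vertex
   set S visited in increasing order of index *)
Definition path_edge (S : {set 'I_n.+2}) (a b : 'I_n.+2) : bool :=
  [&& a < b, a \in S, b \in S & [forall c in S, ~~ ((a < c) && (c < b))]].

(* lower and upper boundary chains of Q: the boundary of the convex polygon Q
   consists of the lower chain v_0, (v_i)_{i in D}, v_{n+1} and the upper
   chain v_0, (v_i)_{i in U}, v_{n+1}, each in increasing order of index *)
Definition lower_chain : {set 'I_n.+2} := v0 |: (vlast |: (vtx @: D)).
Definition upper_chain : {set 'I_n.+2} := v0 |: (vlast |: (vtx @: U)).

Definition polygon_edge (a b : 'I_n.+2) : bool :=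
  path_edge lower_chain a b || path_edge upper_chain a b.

Definition is_diagonal (p : 'I_n.+2 * 'I_n.+2) : bool :=
  (p.1 < p.2) && ~~ polygon_edge p.1 p.2.

Fixpoint lam (x : {perm 'I_n}) (i : nat) : {set 'I_n.+2} :=
  match i with
  | 0 => lower_chain
  | i'.+1 =>
      match (insub i' : option 'I_n) with
      | Some j => let k := x j in
                  if k \in D then lam x i' :\ vtx k else vtx k |: lam x i'
      | None => lam x i'
      end
  end.

Definition eta (x : {perm 'I_n}) : {set 'I_n.+2 * 'I_n.+2} :=
  [set p | is_diagonal p &&
           [exists i : 'I_n.+1, path_edge (lam x i) p.1 p.2]].

End Defs.

Definition is_meet (T : finType) (le : rel T) (x y m : T) : Prop :=
  le m x /\ le m y /\ forall z, le z x -> le z y -> le z m.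
Definition is_join (T : finType) (le : rel T) (x y j : T) : Prop :=
  le x j /\ le y j /\ forall z, le x z -> le y z -> le j z.

Definition lattice_congruence (T : finType) (le : rel T) (r : T -> T -> Prop)
  : Prop :=
  [/\ (forall x, r x x),
      (forall x y, r x y -> r y x),
      (forall x y z, r x y -> r y z -> r x z),
      (forall x1 x2 y1 y2 m1 m2, r x1 y1 -> r x2 y2 ->
         is_meet le x1 x2 m1 -> is_meet le y1 y2 m2 -> r m1 m2) &
      (forall x1 x2 y1 y2 j1 j2, r x1 y1 -> r x2 y2 ->
         is_join le x1 x2 j1 -> is_join le y1 y2 j2 -> r j1 j2)].

(* Main.v *)
Require Import Defs.
From mathcomp Require Import all_boot fingroup perm zify.
Set Implicit Arguments. Unset Strict Implicit. Unset Printing Implicit Defensive.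
Section Real.
Variable n : nat.
Definition pos (x : {perm 'I_n}) (c : 'I_n) : 'I_n := (x^-1)%g c.

Variable key : 'I_n -> nat.
Hypothesis key_inj : injective key.

Definition rk (a : 'I_n) := #|[set c | key c < key a]|.
Lemma rk_lt a : rk a < n.
Proof.
rewrite /rk -[n in _ < n]card_ord; apply: proper_card; apply/properP; split.
  by apply/subsetP.
by exists a; rewrite // inE ltnn.
Qed.
Lemma rk_mono a b : key a < key b -> rk a < rk b.
Proof.
move=> ab; apply: proper_card; apply/properP; split.
  apply/subsetP => c; rewrite !inE => ca; exact: ltn_trans ca ab.
by exists a; rewrite !inE // ltnn.
Qed.
Definition sig_fun (a : 'I_n) : 'I_n := Ordinal (rk_lt a).
Lemma sig_inj : injective sig_fun.
Proof.
move=> a b /(congr1 val) /= e; apply: key_inj.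
case: (ltngtP (key a) (key b)) => // h.
- by have := rk_mono h; rewrite e ltnn.
- by have := rk_mono h; rewrite e ltnn.
Qed.
Lemma realize : exists al : {perm 'I_n},
  forall a b, (pos al a < pos al b) = (key a < key b).
Proof.
exists ((perm sig_inj)^-1)%g => a b; rewrite /pos invgK !permE /=.
apply/idP/idP; last exact: rk_mono.
case: (ltngtP (key a) (key b)) => // h.
- by move=> h2; have := rk_mono h; rewrite ltnNge (ltnW h2).
- by move: h => /key_inj ->; rewrite ltnn.
Qed.
End Real.

Section Main.
Variable n : nat.
Variable D : {set 'I_n}.
Implicit Types x y : {perm 'I_n}.
Lemma posK x c : x (pos x c) = c.
Proof. by rewrite /pos permKV. Qed.
Lemma pos_x x i : pos x (x i) = i.
Proof. by rewrite /pos permK. Qed.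

Lemma inv_setP x a b :
  ((a, b) \in inv_set x) = (a < b) && (pos x b < pos x a).
Proof.
apply/idP/idP.
- case/imset2P => i j _; rewrite inE => /and3P [_ ij xji] [-> ->].
  by rewrite !pos_x xji ij.
- case/andP=> ab pba; apply/imset2P; exists (pos x b) (pos x a) => //.
  + by rewrite inE in_setT !posK pba ab.
  + by rewrite !posK.
Qed.

Lemma weak_leP x y :
  reflect (forall a b : 'I_n, a < b -> pos x b < pos x a -> pos y b < pos y a)
          (weak_le x y).
Proof.
apply: (iffP subsetP) => H.
- move=> a b ab pb; have := H (a, b); rewrite !inv_setP ab pb /=; exact.
- case=> a b; rewrite !inv_setP => /andP [ab pb]; rewrite ab /=; exact: H.
Qed.

Definition inA (i j a : 'I_n) := (a == i :> nat) || ((i < a < j) && (a \notin D)).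
Definition inB (i j b : 'I_n) := (b == j :> nat) || ((i < b < j) && (b \in D)).
Definition keyA (i j c : 'I_n) : nat :=
  if (c < i) || ((i < c < j) && (c \in D)) || (c == j :> nat) then nat_of_ord c
  else if c == i :> nat then n else if c < j then n.+1 + c else (n + n).+2 + c.

Lemma keyA_inj (i j : 'I_n) : i < j -> injective (keyA i j).
Proof.
move=> ij a b; rewrite /keyA.
have := ltn_ord a; have := ltn_ord b.
case: (a \in D); case: (b \in D); rewrite /=;
  do ! case: ifP => /=; move=> *; apply: val_inj => /=; lia.
Qed.

Lemma keyAP (i j a b : 'I_n) : i < j -> a < b ->
  (keyA i j b < keyA i j a) = inA i j a && inB i j b.
Proof.
move=> ij ab; rewrite /keyA /inA /inB.
have := ltn_ord a; have := ltn_ord b.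
case: (a \in D); case: (b \in D); rewrite /=;
  do ! case: ifP => /=; move=> *; lia.
Qed.
Lemma vtxE (k : 'I_n) : nat_of_ord (vtx k) = k.+1.
Proof. rewrite /vtx inordK //; have := ltn_ord k; lia. Qed.
Lemma v0E : nat_of_ord (v0 n) = 0. Proof. by []. Qed.
Lemma vlastE : nat_of_ord (vlast n) = n.+1. Proof. by []. Qed.

Definition cnd x t (k : 'I_n) := if k \in D then t <= pos x k else pos x k < t.

Definition memS x t (v : 'I_n.+2) : bool :=
  (v == 0 :> nat) || (v == n.+1 :> nat) ||
  [exists k : 'I_n, (v == k.+1 :> nat) && cnd x t k].

Lemma lamE x t v : (v \in lam D x t) = memS x t v.
Proof.
elim: t v => [|t IH] v.
  rewrite /= /lower_chain !inE /memS -!val_eqE /= /cnd.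
  rewrite -orbA; congr (_ || (_ || _)); apply/imsetP/existsP.
  - case=> k kD ->; exists k; by rewrite vtxE eqxx kD.
  - case=> k /andP [/eqP vk]; case: ifP => // kD _; exists k => //.
    by apply: val_inj; rewrite /= vtxE.
rewrite /=; case: insubP => [j _ jt|].
- have Hk : pos x (x j) = j by rewrite pos_x.
  have cE : forall k, k != x j -> cnd x t.+1 k = cnd x t k.
    move=> k kj; rewrite /cnd; have : pos x k != j.
      by apply: contra kj => /eqP <-; rewrite posK.
    rewrite -val_eqE jt /=; case: ifP => _ ? ; lia.
  have mE : v != vtx (x j) -> memS x t.+1 v = memS x t v.
    move=> vne; rewrite /memS; congr (_ || _); apply: eq_existsb => k.
    case: (eqVneq (nat_of_ord v) k.+1) => //= vk; rewrite cE //.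
    apply: contra vne => /eqP kj; apply/eqP; apply: val_inj.
    by rewrite /= vk vtxE kj.
  have mk : memS x t.+1 (vtx (x j)) = (x j \notin D).
    rewrite /memS vtxE /= ltn_eqF ?ltnS //.
    apply/existsP/idP.
    + case=> k /andP [/eqP /succn_inj /val_inj <-]; rewrite /cnd Hk jt.
      by case: ifP => //; rewrite ltnn.
    + move=> kD; exists (x j); rewrite eqxx /= /cnd Hk jt.
      by rewrite (negbTE kD) ltnSn.
  have mk0 : memS x t (vtx (x j)) = (x j \in D).
    rewrite /memS vtxE /= ltn_eqF ?ltnS //.
    apply/existsP/idP.
    + case=> k /andP [/eqP /succn_inj /val_inj <-]; rewrite /cnd Hk jt.
      by case: ifP => //; rewrite ltnn.
    + move=> kD; exists (x j); rewrite eqxx /= /cnd Hk jt.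
      by rewrite kD leqnn.
  case: ifP => kD.
  + rewrite in_setD1 IH; case: (eqVneq v (vtx (x j))) => [->|vne].
      by rewrite mk kD.
    by rewrite mE.
  + rewrite in_setU1 IH; case: (eqVneq v (vtx (x j))) => [->|vne].
      by rewrite mk kD.
    by rewrite mE.
- rewrite -leqNgt => nt; rewrite IH /memS; congr (_ || _).
  apply: eq_existsb => k; rewrite /cnd.
  have := ltn_ord (pos x k); case: ifP => _ ?; congr (_ && _); lia.
Qed.

Definition Gp x (i j : 'I_n) :=
  [forall a, forall b, inA i j a ==> inB i j b ==> (a < b) ==> (pos x b < pos x a)].

Lemma GpP x i j : reflect (forall a b, inA i j a -> inB i j b -> a < b -> pos x b < pos x a)
  (Gp x i j).
Proof.
apply: (iffP forallP) => H.
- move=> a b ha hb ab; move/forallP: (H a) => /(_ b); by rewrite ha hb ab.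
- move=> a; apply/forallP => b; apply/implyP => ha; apply/implyP => hb; apply/implyP.
  exact: H.
Qed.

Lemma alpha_ex (i j : 'I_n) : i < j ->
  exists al : {perm 'I_n}, forall y, weak_le al y = Gp y i j.
Proof.
move=> ij; have [al Hal] := realize (keyA_inj ij).
exists al => y; apply/weak_leP/GpP => H.
- move=> a b ha hb ab; apply: H => //; rewrite Hal keyAP // ha hb //.
- move=> a b ab; rewrite Hal keyAP // => /andP [ha hb]; exact: H.
Qed.

Arguments lam : simpl never.

Lemma memS_vtx x t k : memS x t (vtx k) = cnd x t k.
Proof.
rewrite /memS vtxE /=.
have -> : (k.+1 == n.+1) = false by apply/negbTE; rewrite eqSS neq_ltn ltn_ord.
apply/existsP/idP.
- by case=> k' /andP [/eqP /succn_inj /val_inj ->].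
- by move=> h; exists k; rewrite eqxx.
Qed.

Lemma mem_vtx x t k : (vtx k \in lam D x t) = cnd x t k.
Proof. by rewrite lamE memS_vtx. Qed.

Lemma mem_v0 x t : v0 n \in lam D x t.
Proof. by rewrite lamE /memS eqxx. Qed.
Lemma mem_vlast x t : vlast n \in lam D x t.
Proof. by rewrite lamE /memS eqxx orbT. Qed.

Lemma vert_cases (v : 'I_n.+2) :
  [\/ v = v0 n, v = vlast n | exists k : 'I_n, v = vtx k].
Proof.
case: (posnP v) => [v0|vp]; first by constructor 1; apply: val_inj.
case: (ltngtP v n.+1) => [vl|vg|ve]; last by constructor 2; apply: val_inj.
- constructor 3; have kn : v.-1 < n by lia.
  exists (Ordinal kn); apply: val_inj; rewrite /= vtxE /=; lia.
- have := ltn_ord v; lia.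
Qed.

Lemma lam_n x : lam D x n = upper_chain D.
Proof.
apply/setP => v; rewrite /upper_chain !inE.
case: (vert_cases v) => [->|->|[k ->]].
- by rewrite mem_v0 eqxx.
- by rewrite mem_vlast eqxx orbT.
- rewrite mem_vtx /cnd.
  have -> : (vtx k == v0 n) = false by rewrite -val_eqE /= vtxE.
  have -> : (vtx k == vlast n) = false.
    by rewrite -val_eqE /= vtxE; have := ltn_ord k; lia.
  rewrite /=; apply/idP/imsetP.
  + case: ifP => kD; first by rewrite leqNgt ltn_ord.
    by move=> _; exists k; rewrite // /U inE kD.
  + case=> k' k'U /(congr1 val); rewrite /= !vtxE => /succn_inj /val_inj ek.
    by move: k'U; rewrite /U inE -ek => /negbTE ->; rewrite ltn_ord.
Qed.

Definition Ex x (a b : 'I_n.+2) := [exists t : 'I_n.+1, path_edge (lam D x t) a b].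

Lemma Ex_eta x a b : Ex x a b = (a < b) && (((a, b) \in eta D x) || polygon_edge D a b).
Proof.
apply/idP/idP.
- case/existsP => t pe; have ab : a < b by case/andP: pe.
  rewrite ab /= /eta inE /is_diagonal /= ab /=.
  case: (polygon_edge D a b); rewrite ?orbT //= orbF.
  by apply/existsP; exists t.
- case/andP => ab /orP [|].
  + by rewrite /eta inE => /andP [_].
  + case/orP => pe; apply/existsP.
    * by exists ord0.
    * by exists ord_max; rewrite /= lam_n.
Qed.

Lemma Ex_inv x y : eta D x = eta D y -> Ex x =2 Ex y.
Proof. by move=> e a b; rewrite !Ex_eta e. Qed.


Lemma edge_around (S : {set 'I_n.+2}) (u w lo hi : 'I_n.+2) :
  u \in S -> w \in S -> u <= lo -> lo < hi -> hi <= w ->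
  (forall z, z \in S -> lo < z -> z < hi -> False) ->
  exists a', exists b', [/\ path_edge S a' b', a' <= lo, hi <= b',
                         (lo \in S -> a' = lo) & (hi \in S -> b' = hi)].
Proof.
move=> uS wS ulo lohi hiw nomid.
pose P1 := [pred z : 'I_n.+2 | (z \in S) && (z <= lo)].
pose P2 := [pred z : 'I_n.+2 | (z \in S) && (hi <= z)].
have Pu : P1 u by rewrite /P1 /= uS ulo.
have Pw : P2 w by rewrite /P2 /= wS hiw.
case: (@arg_maxnP _ u P1 (fun z : 'I_n.+2 => nat_of_ord z) Pu) => a' /andP [a'S a'lo] amax.
case: (@arg_minnP _ w P2 (fun z : 'I_n.+2 => nat_of_ord z) Pw) => b' /andP [b'S b'hi] bmin.
exists a', b'; split => //.
- rewrite /path_edge a'S b'S /=; apply/andP; split.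
    exact: leq_ltn_trans a'lo (leq_trans lohi b'hi).
  apply/forallP => z; apply/implyP => zS; apply/negP => /andP [az zb].
  case: (leqP z lo) => zlo.
    by have := amax z; rewrite /P1 /= zS zlo => /(_ isT); rewrite leqNgt az.
  case: (ltnP z hi) => zhi; first exact: (nomid z zS zlo zhi).
  by have := bmin z; rewrite /P2 /= zS zhi => /(_ isT); rewrite leqNgt zb.
- move=> loS; apply: val_inj; apply/eqP; rewrite eqn_leq a'lo /=.
  by have := amax lo; rewrite /P1 /= loS leqnn; apply.
- move=> hiS; apply: val_inj; apply/eqP; rewrite eqn_leq b'hi andbT.
  by have := bmin hi; rewrite /P2 /= hiS leqnn; apply.
Qed.


Definition Lb (i j : 'I_n) (a' : 'I_n.+2) :=
  [exists k : 'I_n, (a' == vtx k) && (k \notin D) && (i <= k < j)]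
  || ((i \in D) && (a' <= i)).
Definition Rb (i j : 'I_n) (b' : 'I_n.+2) :=
  [exists k : 'I_n, (b' == vtx k) && (k \in D) && (i < k <= j)]
  || ((j \notin D) && (j.+1 < b')).

Lemma inA_range (i j a : 'I_n) : i < j -> inA i j a -> i <= a < j.
Proof. move=> ij; rewrite /inA => /orP [/eqP ->|/andP [/andP [? ?] _]]; lia. Qed.
Lemma inB_range (i j b : 'I_n) : i < j -> inB i j b -> i < b <= j.
Proof. move=> ij; rewrite /inB => /orP [/eqP ->|/andP [/andP [? ?] _]]; lia. Qed.

Lemma pe_mid (S : {set 'I_n.+2}) (a' b' z : 'I_n.+2) :
  path_edge S a' b' -> a' < z -> z < b' -> z \notin S.
Proof.
case/and4P => _ _ _ /forallP /(_ z); rewrite implybE => /orP [//|/negP H] az zb.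
by exfalso; apply: H; rewrite az zb.
Qed.

Lemma box_to_notG x (i j : 'I_n) : i < j ->
  [exists a', exists b', [&& Ex x a' b', Lb i j a' & Rb i j b']] -> ~~ Gp x i j.
Proof.
move=> ij /existsP [a' /existsP [b' /and3P [/existsP [t pe] hl hr]]].
have a'b' : a' < b' by case/andP: pe.
have a'S : a' \in lam D x t by case/and4P: pe.
have b'S : b' \in lam D x t by case/and4P: pe.
have [a [ha pa ea]] : exists a, [/\ inA i j a, pos x a < t &
    (a' == a.+1 :> nat) || ((a == i :> nat) && (a' <= i))].
  case/orP: hl => [/existsP [k /andP [/andP [/eqP ak kD] rk]]|/andP [iD a'i]].
  - exists k; split.
    + rewrite /inA; case: (eqVneq (nat_of_ord k) i) => //= ki.
      rewrite kD andbT; move: rk; lia.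
    + by move: a'S; rewrite ak mem_vtx /cnd (negbTE kD).
    + by rewrite ak vtxE eqxx.
  - exists i; split; rewrite ?eqxx ?a'i ?orbT //.
      by rewrite /inA eqxx.
    have : vtx i \notin lam D x t.
      apply: (pe_mid pe); rewrite vtxE; first by lia.
      case/orP: hr => [/existsP [k /andP [/andP [/eqP -> _] /andP [ik _]]]|/andP [_ jb]].
        by rewrite vtxE.
      by lia.
    by rewrite mem_vtx /cnd iD -ltnNge.
have [b [hb pb eb]] : exists b, [/\ inB i j b, t <= pos x b &
    (b' == b.+1 :> nat) || ((b == j :> nat) && (j.+1 < b'))].
  case/orP: hr => [/existsP [k /andP [/andP [/eqP bk kD] rk]]|/andP [jD jb]].
  - exists k; split.
    + rewrite /inB; case: (eqVneq (nat_of_ord k) j) => //= kj.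
      rewrite kD andbT; move: rk; lia.
    + by move: b'S; rewrite bk mem_vtx /cnd kD.
    + by rewrite bk vtxE eqxx.
  - exists j; split; rewrite ?eqxx ?jb ?orbT //.
      by rewrite /inB eqxx.
    have : vtx j \notin lam D x t.
      apply: (pe_mid pe); rewrite vtxE; last by lia.
      case/orP: hl => [/existsP [k /andP [/andP [/eqP -> _] /andP [_ kj]]]|/andP [_ a'i]].
        by rewrite vtxE.
      by lia.
    by rewrite mem_vtx /cnd (negbTE jD) -leqNgt.
have ab : a < b.
  have := inA_range ij ha; have := inB_range ij hb.
  case/orP: ea => [/eqP ea|/andP [/eqP ea ea2]];
    case/orP: eb => [/eqP eb|/andP [/eqP eb eb2]]; lia.
apply/negP => /GpP /(_ a b ha hb ab); move: pa pb; lia.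
Qed.


Lemma notG_to_box x (i j : 'I_n) : i < j -> ~~ Gp x i j ->
  [exists a', exists b', [&& Ex x a' b', Lb i j a' & Rb i j b']].
Proof.
move=> ij /GpP nG.
pose PW := [pred p : 'I_n * 'I_n | [&& inA i j p.1, inB i j p.2, p.1 < p.2 &
                                       pos x p.1 < pos x p.2]].
have [p0 Pp0] : exists p0, PW p0.
  case: (boolP [exists p, PW p]) => [/existsP //|/existsPn H].
  exfalso; apply: nG => a b ha hb ab.
  have := H (a, b); rewrite /PW /= ha hb ab /= -leqNgt leq_eqVlt => /orP [|//].
  move/eqP/val_inj/(congr1 (x : 'I_n -> 'I_n)); rewrite !posK => e.
  by move: ab; rewrite e ltnn.
case: (@arg_minnP _ p0 PW (fun p => p.2 - p.1) Pp0) => [[a b]].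
rewrite /PW /= => /and4P [ha hb ab pab] pmin.
have [ia aj] := andP (inA_range ij ha).
have [ib bj] := andP (inB_range ij hb).
have cD : forall c : 'I_n, a < c -> c < b -> c \in D -> pos x c < pos x a.
  move=> c ac cb cDD; case: (ltngtP (pos x c) (pos x a)) => // h.
  - have := pmin (a, c); rewrite /PW /= ha ac h /inB cDD.
    have -> : (i < c < j) by lia.
    rewrite orbT => /(_ isT); lia.
  - move/val_inj/(congr1 (x : 'I_n -> 'I_n)): h; rewrite !posK => e.
    by move: ac; rewrite e ltnn.
have cU : forall c : 'I_n, a < c -> c < b -> c \notin D -> pos x b < pos x c.
  move=> c ac cb cDD; case: (ltngtP (pos x b) (pos x c)) => // h.
  - have := pmin (c, b); rewrite /PW /= hb cb h /inA cDD.
    have -> : (i < c < j) by lia.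
    rewrite orbT => /(_ isT); lia.
  - move/val_inj/(congr1 (x : 'I_n -> 'I_n)): h; rewrite !posK => e.
    by move: cb; rewrite e ltnn.
have tn : (pos x a).+1 < n.+1 by rewrite ltnS.
pose t := Ordinal tn.
have := @edge_around (lam D x t) (v0 n) (vlast n) (vtx a) (vtx b)
  (mem_v0 x t) (mem_vlast x t).
rewrite !vtxE /= => /(_ isT ab); case.
- by rewrite ltnS; have := ltn_ord b; lia.
- move=> z zS az zb; move: zS.
  case: (vert_cases z) az zb => [->|->|[c ->]]; rewrite ?vtxE //=.
  + by have := ltn_ord b; lia.
  + rewrite !ltnS => ac cb; rewrite mem_vtx /cnd /t /=.
    case: ifP => cDb.
    * by have := cD c ac cb cDb; lia.
    * by have := cU c ac cb (negbT cDb); lia.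
move=> a' [b' [pe a'a bb' ha' hb']].
apply/existsP; exists a'; apply/existsP; exists b'.
rewrite /Ex; apply/and3P; split.
- by apply/existsP; exists t.
- rewrite /Lb; case: (boolP (a \in D)) => aD.
  + have ai : a = i.
      by move: ha; rewrite /inA aD andbF orbF => /eqP /val_inj.
    have a'S : a' \in lam D x t by case/and4P: pe.
    have : a' != vtx a.
      apply: contraTneq a'S => ->; by rewrite mem_vtx /cnd aD /t /= ltnn.
    rewrite -val_eqE /= vtxE => ne; apply/orP; right; rewrite -ai aD /=.
    by move: a'a ne; lia.
  + apply/orP; left; apply/existsP; exists a.
    rewrite ha' ?eqxx ?aD ?ia ?aj //.
    by rewrite mem_vtx /cnd (negbTE aD) /t /=.
- rewrite /Rb; case: (boolP (b \in D)) => bD.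
  + apply/orP; left; apply/existsP; exists b.
    rewrite hb' ?eqxx ?bD ?bj ?ib ?andbT //=.
    by rewrite mem_vtx /cnd bD /t /=.
  + have bj' : b = j.
      by move: hb; rewrite /inB (negbTE bD) andbF orbF => /eqP /val_inj.
    have b'S : b' \in lam D x t by case/and4P: pe.
    have : b' != vtx b.
      apply: contraTneq b'S => ->; rewrite mem_vtx /cnd (negbTE bD) /t /=.
      by rewrite ltnS -ltnNge.
    rewrite -val_eqE /= vtxE => ne; apply/orP; right; rewrite -bj' bD /=.
    by move: bb' ne; lia.
Qed.

Lemma boxE x (i j : 'I_n) : i < j ->
  Gp x i j = ~~ [exists a', exists b', [&& Ex x a' b', Lb i j a' & Rb i j b']].
Proof.
move=> ij; apply/idP/idP.
- by apply: contraL => /(box_to_notG ij).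
- by apply: contraR => /(notG_to_box ij).
Qed.

Lemma Gp_inv x y (i j : 'I_n) : i < j -> eta D x = eta D y -> Gp x i j = Gp y i j.
Proof.
move=> ij e; rewrite !boxE //; congr (~~ _).
apply: eq_existsb => a'; apply: eq_existsb => b'; by rewrite (Ex_inv e).
Qed.

Lemma tau_val (s s' p : 'I_n) :
  nat_of_ord (tperm s s' p) = if (p == s :> nat) then nat_of_ord s'
    else if (p == s' :> nat) then nat_of_ord s else nat_of_ord p.
Proof.
case: tpermP => [->|->|ne1 ne2]; rewrite ?eqxx //=.
- by case: eqP => // /val_inj ->.
- case: eqP => [/val_inj //|_]; case: eqP => [/val_inj //|//].
Qed.
Lemma tau_lt (s s' p q : 'I_n) : s' = s.+1 :> nat ->
  ~~ ((p == s) && (q == s')) -> ~~ ((p == s') && (q == s)) ->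
  (tperm s s' p < tperm s s' q) = (p < q).
Proof.
move=> e; rewrite !tau_val -!val_eqE /=.
do ?[case: eqP => ? /=]; lia.
Qed.

Lemma pos_swap x (s s' k : 'I_n) :
  pos (tperm s s' * x)%g k = tperm s s' (pos x k).
Proof. by rewrite /pos invMg tpermV permM. Qed.

Lemma cnd_S y t k : pos y k != t :> nat -> cnd y t.+1 k = cnd y t k.
Proof. rewrite /cnd; case: ifP => _ ?; lia. Qed.

Lemma lam_step_agree y t v :
  (forall k, v = vtx k -> pos y k != t :> nat) ->
  (v \in lam D y t.+1) = (v \in lam D y t).
Proof.
move=> H; case: (vert_cases v) => [->|->|[k ek]].
- by rewrite !mem_v0.
- by rewrite !mem_vlast.
- by rewrite ek !mem_vtx cnd_S // H.
Qed.

Lemma split_edge (S S1 S2 : {set 'I_n.+2}) (cv u v : 'I_n.+2) :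
  cv \in S -> (forall z : 'I_n.+2, z <= cv -> (z \in S) = (z \in S1)) ->
  (forall z : 'I_n.+2, cv <= z -> (z \in S) = (z \in S2)) ->
  path_edge S u v -> path_edge S1 u v || path_edge S2 u v.
Proof.
move=> cS H1 H2 pe; have := pe; case/and4P => uv uS vS /forallP nomid.
case: (leqP v cv) => vc.
- apply/orP; left; rewrite /path_edge uv -!H1 ?uS ?vS //=; last exact: ltnW (leq_trans uv vc).
  apply/forallP => z; apply/implyP => zS1; apply/negP => /andP [uz zv].
  have : z \in S by rewrite H1 // ltnW // (leq_trans zv vc).
  by apply/negP; apply: pe_mid pe uz zv.
- have cu : cv <= u.
    rewrite leqNgt; apply/negP => uc.
    by have := pe_mid pe uc vc; rewrite cS.
  apply/orP; right; rewrite /path_edge uv -!H2 ?uS ?vS //=; last exact: leq_trans cu (ltnW uv).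
  apply/forallP => z; apply/implyP => zS1; apply/negP => /andP [uz zv].
  have : z \in S by rewrite H2 // ltnW // (leq_ltn_trans cu uz).
  by apply/negP; apply: pe_mid pe uz zv.
Qed.

Definition contr x (s s' c : 'I_n) :=
  [&& (s' == s.+1 :> nat), x s' < x s, x s' < c, c < x s &
      ((c \in D) && (s' < pos x c)) || ((c \notin D) && (pos x c < s))].


Section Swap.
Variables (x : {perm 'I_n}) (s s' c : 'I_n).
Hypothesis Hc : contr x s s' c.
Let tau := tperm s s'.
Let x' := (tau * x)%g.

Let ss' : s' = s.+1 :> nat.
Proof. by case/and5P: Hc => /eqP. Qed.
Let ac : x s' < c. Proof. by case/and5P: Hc. Qed.
Let cb : c < x s. Proof. by case/and5P: Hc. Qed.
Let cpos : ((c \in D) && (s' < pos x c)) || ((c \notin D) && (pos x c < s)).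
Proof. by case/and5P: Hc. Qed.

Let posx' k : pos x' k = tau (pos x k). Proof. exact: pos_swap. Qed.

Let pos_ne_s k : k != x s -> pos x k != s :> nat.
Proof.
move=> kb; apply: contra kb => /eqP /val_inj <-; by rewrite posK.
Qed.
Let pos_ne_s' k : k != x s' -> pos x k != s' :> nat.
Proof.
move=> kb; apply: contra kb => /eqP /val_inj <-; by rewrite posK.
Qed.

Lemma lam_swap_eq (t : nat) : t != s' :> nat -> lam D x' t = lam D x t.
Proof.
move=> ts; apply/setP => v; rewrite !lamE /memS; congr (_ || _).
apply: eq_existsb => k; rewrite /cnd posx' /tau tau_val.
have := ss'; case: ifP => _; do ?[case: eqP => ? /=]; lia.
Qed.

Lemma cS x0 : x0 = x \/ x0 = x' -> vtx c \in lam D x0 s'.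
Proof.
have cn1 : c != x s by rewrite neq_ltn cb.
have cn2 : c != x s' by rewrite neq_ltn ac orbT.
have hp : pos x' c = pos x c.
  rewrite posx' /tau; apply: val_inj; rewrite /= tau_val.
  have := pos_ne_s cn1; have := pos_ne_s' cn2.
  by do 2 case: eqP => //= _.
case=> ->; rewrite mem_vtx /cnd ?hp; move: cpos; case: (c \in D) => /=; lia.
Qed.

Let vle (k : 'I_n) : vtx k <= vtx c -> k <= c.
Proof. by rewrite !vtxE. Qed.
Let vge (k : 'I_n) : vtx c <= vtx k -> c <= k.
Proof. by rewrite !vtxE. Qed.

Let px's (k : 'I_n) : (pos x' k == s :> nat) = (pos x k == s' :> nat).
Proof.
rewrite posx' /tau tau_val; have := ss'.
(do !case: ifP => ?); lia.
Qed.
Let px's' (k : 'I_n) : (pos x' k == s' :> nat) = (pos x k == s :> nat).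
Proof.
rewrite posx' /tau tau_val; have := ss'.
(do !case: ifP => ?); lia.
Qed.

Let lo_k (k : 'I_n) : k <= c -> k != x s.
Proof. by move=> kc; rewrite neq_ltn (leq_ltn_trans kc cb). Qed.
Let hi_k (k : 'I_n) : c <= k -> k != x s'.
Proof. by move=> kc; rewrite neq_ltn (leq_trans ac kc) orbT. Qed.

Lemma eta_swap : eta D x' = eta D x.
Proof.
have tn1 : s'.+1 < n.+1 by rewrite ltnS.
have tn2 : s < n.+1 by rewrite ltnS ltnW.
have ss'' : s'.+1 = s.+2 by rewrite ss'.
apply/setP => p; rewrite !inE; congr (_ && _); apply/existsP/existsP => [[t pe]|[t pe]].
- case: (eqVneq (nat_of_ord t) s') => ts; last first.
    by exists t; rewrite -lam_swap_eq.
  move: pe; rewrite ts => pe.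
  have := @split_edge (lam D x' s') (lam D x' s'.+1) (lam D x' s) (vtx c) p.1 p.2
    (cS (or_intror erefl)).
  case/(_ _ _ pe)/orP.
  + move=> z zc; symmetry; apply: lam_step_agree => k ek.
    by rewrite px's' pos_ne_s // lo_k // vle // -ek.
  + move=> z zc; rewrite ss'; apply: lam_step_agree => k ek.
    by rewrite px's pos_ne_s' // hi_k // vge // -ek.
  + by move=> h; exists (Ordinal tn1); rewrite -lam_swap_eq //= ss'; lia.
  + by move=> h; exists (Ordinal tn2); rewrite -lam_swap_eq //= ss'; lia.
- case: (eqVneq (nat_of_ord t) s') => ts; last first.
    by exists t; rewrite lam_swap_eq.
  move: pe; rewrite ts => pe.
  have := @split_edge (lam D x s') (lam D x s) (lam D x s'.+1) (vtx c) p.1 p.2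
    (cS (or_introl erefl)).
  case/(_ _ _ pe)/orP.
  + move=> z zc; rewrite ss'; apply: lam_step_agree => k ek.
    by rewrite pos_ne_s // lo_k // vle // -ek.
  + move=> z zc; symmetry; apply: lam_step_agree => k ek.
    by rewrite pos_ne_s' // hi_k // vge // -ek.
  + by move=> h; exists (Ordinal tn2); rewrite lam_swap_eq //= ss'; lia.
  + by move=> h; exists (Ordinal tn1); rewrite lam_swap_eq //= ss'; lia.
Qed.

Let posE (k p : 'I_n) : (pos x k == p) = (k == x p).
Proof. by apply/eqP/eqP => [<-|->]; rewrite ?posK ?pos_x. Qed.

Let ab_lt : x s' < x s. Proof. exact: ltn_trans ac cb. Qed.

Let key (u v : 'I_n) : ~~ ((u == x s') && (v == x s)) -> u < v ->
  (pos x' v < pos x' u) = (pos x v < pos x u).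
Proof.
move=> nuv uv; rewrite !posx' /tau tau_lt //.
- by rewrite !posE andbC.
- rewrite !posE; apply/negP => /andP [/eqP ev /eqP eu].
  by move: uv; rewrite ev eu ltnNge (ltnW ab_lt).
Qed.

Lemma Gp_swap (i j : 'I_n) : i < j -> Gp x' i j = Gp x i j.
Proof.
move=> ij; apply/GpP/GpP => H a0 b0 ha hb ab0.
- case: (boolP ((a0 == x s') && (b0 == x s))) => [/andP [/eqP -> /eqP ->]|nuv].
    by rewrite !pos_x ss'.
  by rewrite -key // H.
- case: (boolP ((a0 == x s') && (b0 == x s))) => [/andP [/eqP ea /eqP eb]|nuv].
    exfalso; move: ha hb ab0; rewrite ea eb => ha hb ab0.
    have [ia aj] := andP (inA_range ij ha).
    have [ib bj] := andP (inB_range ij hb).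
    move: cpos => /orP [/andP [cD pc]|/andP [cD pc]].
    + have : pos x c < pos x (x s').
        apply: H => //; rewrite /inB cD andbT.
        by apply/orP; right; apply/andP; split; lia.
      by rewrite pos_x; lia.
    + have : pos x (x s) < pos x c.
        apply: H => //; rewrite /inA cD andbT.
        by apply/orP; right; apply/andP; split; lia.
      by rewrite pos_x; lia.
  by rewrite key // H.
Qed.

Lemma inv_swap : inv_set x' \proper inv_set x.
Proof.
apply/properP; split.
- apply/subsetP => [[u v]]; rewrite !inv_setP => /andP [uv pv]; rewrite uv /=.
  case: (boolP ((u == x s') && (v == x s))) => [/andP [/eqP -> /eqP ->]|nuv].
    by rewrite !pos_x ss'.
  by rewrite -key.
- exists (x s', x s); first by rewrite inv_setP ab_lt !pos_x ss' ltnSn.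
  rewrite inv_setP ab_lt /= !posx' /tau !pos_x tpermL tpermR; have := ss'; lia.
Qed.

End Swap.


Definition sortable x := ~~ [exists s, exists s', exists c, contr x s s' c].

Lemma pos_inj x a b : pos x a = pos x b -> a = b.
Proof. by move/(congr1 x); rewrite !posK. Qed.

Lemma sort_adj x (s s' : 'I_n) : sortable x -> s' = s.+1 :> nat -> x s' < x s ->
  Gp x (x s') (x s).
Proof.
move=> so ss' ab.
have hc : forall c : 'I_n, x s' < c -> c < x s ->
    ((c \in D) && (pos x c < s)) || ((c \notin D) && (s' < pos x c)).
  move=> c ac cb; have : ~~ contr x s s' c.
    by apply: contra so => h; apply/existsP; exists s; apply/existsP; exists s';
       apply/existsP; exists c.
  rewrite /contr ss' eqxx ab ac cb /=.
  have n1 : pos x c != s by apply: contraTneq cb => <-; rewrite posK ltnn.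
  have n2 : pos x c != s' by apply: contraTneq ac => <-; rewrite posK ltnn.
  move: n1 n2; rewrite -!val_eqE /=; case: (c \in D) => /=; lia.
apply/GpP => a' b' ha hb ab'.
have pa : s' <= pos x a'.
  move: ha; rewrite /inA => /orP [/eqP /val_inj ->|/andP [/andP [h1 h2] h3]].
    by rewrite pos_x.
  by have := hc a' h1 h2; rewrite (negbTE h3) /=; lia.
have pb : pos x b' <= s.
  move: hb; rewrite /inB => /orP [/eqP /val_inj ->|/andP [/andP [h1 h2] h3]].
    by rewrite pos_x.
  by have := hc b' h1 h2; rewrite h3 /=; lia.
lia.
Qed.

Lemma sortS x : sortable x -> forall a b : 'I_n, a < b -> pos x b < pos x a -> Gp x a b.
Proof.
move=> so; suff H : forall d (a b : 'I_n), pos x a - pos x b <= d -> a < b ->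
    pos x b < pos x a -> Gp x a b.
  by move=> a b; apply: (H _ a b (leqnn _)).
elim=> [|d IH] a b hd ab pba; first by lia.
have s1 : (pos x b).+1 < n by have := ltn_ord (pos x a); lia.
pose s' := Ordinal s1.
have es : x (pos x b) = b by rewrite posK.
case: (eqVneq (pos x a) s') => [eas|nas].
  have := @sort_adj x (pos x b) s' so erefl.
  by rewrite -eas !posK => /(_ ab).
set c := x s'.
have pc : pos x c = s' by rewrite pos_x.
have pca : s' < pos x a.
  move: nas; rewrite -val_eqE /= => nas; lia.
have pca' : (pos x b).+1 < pos x a by exact: pca.
have ec : x s' = c by [].
clearbody c.
case: (ltngtP a c) => [ac|ca|ac].
-
  case: (ltngtP c b) => [cb|bc|cb].
  +
    have Hac : Gp x a c by apply: IH => //; rewrite ?pc /=; lia.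
    have Hcb : Gp x c b.
      by have := @sort_adj x (pos x b) s' so erefl; rewrite es ec => H; exact: (H cb).
    move/GpP: Hac => Hac; move/GpP: Hcb => Hcb.
    apply/GpP => a' b' ha hb ab'.
    move: (ha) (hb); rewrite /inA /inB => ha' hb'.
    case: (ltngtP b' c) => [b'c|cb'|b'c].
    * apply: Hac => //; rewrite /inA /inB; lia.
    * case: (ltngtP a' c) => [a'c|ca'|a'c].
      - have h1 : pos x c < pos x a'.
          apply: Hac => //; last by rewrite /inB eqxx.
          by move: ha'; rewrite /inA; lia.
        have h2 : pos x b' < pos x c.
          apply: Hcb => //; first by rewrite /inA eqxx.
          by move: hb'; rewrite /inB; lia.
        exact: ltn_trans h2 h1.
      - apply: Hcb => //; rewrite /inA /inB; lia.
      - apply: Hcb => //; rewrite /inA /inB; move: a'c => /val_inj <-; lia.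
    * move: b'c => /val_inj b'c; subst b'.
      apply: Hac => //; rewrite /inA /inB; lia.
  +
    have Hac : Gp x a c by apply: IH => //; rewrite ?pc /=; lia.
    move/GpP: Hac => Hac; apply/GpP => a' b' ha hb ab'.
    move: (ha) (hb); rewrite /inA /inB => ha' hb'.
    case: (eqVneq b' b) => [eb|nb].
    * subst b'; have h1 : pos x c < pos x a'.
        apply: Hac; last by lia.
          by move: ha'; rewrite /inA; lia.
        by rewrite /inB eqxx.
      by move: h1; rewrite pc /=; lia.
    * apply: Hac => //; rewrite /inA /inB; move: nb; rewrite -val_eqE /=; lia.
  + by move/val_inj: cb => cb; move: pc; rewrite cb => /(congr1 val) /=; lia.
-
  have cb : c < b by lia.
  have Hcb : Gp x c b.
    by have := @sort_adj x (pos x b) s' so erefl; rewrite es ec => H; exact: (H cb).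
  have aU : a \notin D.
    apply/negP => aD.
    have : ~~ contr x (pos x b) s' a.
      by apply: contra so => h; apply/existsP; exists (pos x b); apply/existsP; exists s';
         apply/existsP; exists a.
    by rewrite /contr /= eqxx es ec cb ca ab aD /=; lia.
  move/GpP: Hcb => Hcb; apply/GpP => a' b' ha hb ab'.
  case: (eqVneq a' a) => [ea|na].
    subst a'; apply: Hcb => //; move: ha hb; rewrite /inA /inB; lia.
  apply: Hcb => //; move: na ha hb; rewrite -val_eqE /inA /inB /=; lia.
- by move/val_inj: ac => ac; move: pca; rewrite ac pc ltnn.
Qed.

End Main.
Section Main2.
Variable n : nat.
Variable D : {set 'I_n}.
Implicit Types x y : {perm 'I_n}.

Lemma incr_id (f : 'I_n -> 'I_n) : (forall p q : 'I_n, p < q -> f p < f q) ->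
  forall p, f p = p.
Proof.
move=> H.
have ge : forall k (p : 'I_n), p = k :> nat -> k <= f p.
  elim=> [//|k IH] p pk.
  have kn : k < n by have := ltn_ord p; lia.
  have := IH (Ordinal kn) erefl; have := H (Ordinal kn) p; rewrite pk /= => /(_ (ltnSn k)).
  lia.
have le : forall k (p : 'I_n), p + k = n.-1 -> f p <= p.
  elim=> [|k IH] p pk.
    by have := ltn_ord (f p); lia.
  have qn : p.+1 < n by have := ltn_ord p; lia.
  have := IH (Ordinal qn) ltac:(rewrite /=; lia); have := H p (Ordinal qn) (ltnSn p).
  rewrite /=; lia.
move=> p; apply: val_inj; apply/eqP; rewrite eqn_leq (ge p p erefl) andbT.
apply: (le (n.-1 - p)); have := ltn_ord p; lia.
Qed.


Lemma sort_uniq x y : sortable D x -> sortable D y ->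
  (forall i j : 'I_n, i < j -> Gp D x i j = Gp D y i j) -> x = y.
Proof.
move=> sx sy H.
have ord : forall a b : 'I_n, a < b -> (pos x b < pos x a) = (pos y b < pos y a).
  have e : forall z, sortable D z -> forall a b : 'I_n, a < b ->
      (pos z b < pos z a) = Gp D z a b.
    move=> z sz a b ab; apply/idP/idP; first exact: sortS.
    by move/GpP; apply; rewrite // /inA /inB eqxx.
  by move=> a b ab; rewrite (e x sx a b ab) (e y sy a b ab) H.
have inc : forall p q : 'I_n, p < q -> pos y (x p) < pos y (x q).
  move=> p q pq; case: (ltngtP (x p) (x q)) => [h|h|h].
  - have := ord _ _ h; rewrite !pos_x ltnNge (ltnW pq) /= => /esym/negbT.
    rewrite -leqNgt leq_eqVlt => /orP [/eqP/val_inj e|//].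
    by move/pos_inj/perm_inj: e => e; move: pq; rewrite e ltnn.
  - by have := ord _ _ h; rewrite !pos_x pq.
  - by move/val_inj/perm_inj: h => h; move: pq; rewrite h ltnn.
have := incr_id inc => e; apply/permP => p.
by have := e p => /(congr1 y); rewrite posK => ->.
Qed.

Lemma descent x : exists x0, [/\ sortable D x0, eta D x0 = eta D x &
  forall i j : 'I_n, i < j -> Gp D x0 i j = Gp D x i j].
Proof.
move: {2}#|inv_set x| (leqnn #|inv_set x|) => m; elim: m x => [|m IH] x hm.
- exists x; split => //; apply/negP => /existsP [s /existsP [s' /existsP [c h]]].
  have := proper_card (inv_swap h); move: hm; lia.
- case: (boolP (sortable D x)) => so; first by exists x.
  move: so; rewrite negbK => /existsP [s /existsP [s' /existsP [c h]]].
  have := proper_card (inv_swap h) => lt.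
  have [x0 [s0 e0 g0]] := IH (tperm s s' * x)%g ltac:(move: hm lt; lia).
  exists x0; split => //; first by rewrite e0 (eta_swap h).
  by move=> i j ij; rewrite g0 // (Gp_swap h).
Qed.

Lemma separation x y : (forall i j : 'I_n, i < j -> Gp D x i j = Gp D y i j) ->
  eta D x = eta D y.
Proof.
move=> H; have [x0 [sx ex gx]] := descent x; have [y0 [sy ey gy]] := descent y.
have e0 : x0 = y0 by apply: sort_uniq => // i j ij; rewrite gx // gy // H.
by rewrite -ex -ey e0.
Qed.

Lemma meet_compat x1 x2 y1 y2 m1 m2 : eta D x1 = eta D y1 -> eta D x2 = eta D y2 ->
  is_meet (@weak_le n) x1 x2 m1 -> is_meet (@weak_le n) y1 y2 m2 -> eta D m1 = eta D m2.
Proof.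
move=> e1 e2 [m1x1 [m1x2 m1u]] [m2y1 [m2y2 m2u]]; apply: separation => i j ij.
have [al Hal] := alpha_ex D ij.
have tr : forall a b c : {perm 'I_n}, weak_le a b -> weak_le b c -> weak_le a c.
  by move=> a b c; apply: subset_trans.
have gm : forall u v m, weak_le m u -> weak_le m v ->
    (forall z, weak_le z u -> weak_le z v -> weak_le z m) ->
    Gp D m i j = Gp D u i j && Gp D v i j.
  move=> u v m mu mv mU; rewrite -!Hal; apply/idP/andP.
  - by move=> h; split; apply: tr h _.
  - by case=> h1 h2; apply: mU.
by rewrite (gm _ _ _ m1x1 m1x2 m1u) (gm _ _ _ m2y1 m2y2 m2u) (Gp_inv ij e1) (Gp_inv ij e2).
Qed.

End Main2.

Section Rev.
Variable n : nat.
Implicit Types x y : {perm 'I_n}.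

Lemma revf_inj x : injective (fun i : 'I_n => x (rev_ord i)).
Proof. by move=> i j /perm_inj /rev_ord_inj. Qed.
Definition revp x : {perm 'I_n} := perm (@revf_inj x).

Lemma pos_rev x c : pos (revp x) c = rev_ord (pos x c).
Proof. by apply: (@perm_inj _ (revp x)); rewrite posK permE /= rev_ordK posK. Qed.

Lemma revpK x : revp (revp x) = x.
Proof. by apply/permP => i; rewrite !permE /= rev_ordK. Qed.

Lemma weak_le_rev x y : weak_le x y = weak_le (revp y) (revp x).
Proof.
apply/weak_leP/weak_leP => H a b ab; rewrite ?pos_rev /=.
- move=> h; have h' : pos y a < pos y b by move: h; have := ltn_ord (pos y a);
    have := ltn_ord (pos y b); lia.
  have : ~~ (pos x b < pos x a).
    by apply/negP => /(H _ _ ab); move: h'; lia.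
  rewrite -leqNgt leq_eqVlt => /orP [/eqP /val_inj /pos_inj e|h2].
    by move: ab; rewrite e ltnn.
  by move: h2; have := ltn_ord (pos x a); have := ltn_ord (pos x b); lia.
- move=> h; have : ~~ (pos y a < pos y b).
    apply/negP => h2; have := H a b ab; rewrite !pos_rev /=.
    have := ltn_ord (pos x a); have := ltn_ord (pos x b);
    have := ltn_ord (pos y a); have := ltn_ord (pos y b); move: h h2; lia.
  rewrite -leqNgt leq_eqVlt => /orP [/eqP /val_inj /pos_inj e|//].
  by move: ab; rewrite e ltnn.
Qed.

Lemma lam_rev (D : {set 'I_n}) x (t : nat) : t <= n ->
  lam (~: D) (revp x) t = lam D x (n - t).
Proof.
move=> tn; apply/setP => v; rewrite !lamE /memS; congr (_ || _).
apply: eq_existsb => k; rewrite /cnd pos_rev inE /=.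
have := ltn_ord (pos x k); case: (k \in D) => /= ?; congr (_ && _); lia.
Qed.

Lemma eta_rev (D : {set 'I_n}) x : eta (~: D) (revp x) = eta D x.
Proof.
apply/setP => p; rewrite !inE.
have -> : is_diagonal (~: D) p = is_diagonal D p.
  rewrite /is_diagonal /polygon_edge.
  have -> : upper_chain (~: D) = lower_chain D by rewrite /upper_chain /U setCK.
  have -> : lower_chain (~: D) = upper_chain D by [].
  by rewrite orbC.
congr (_ && _); apply/existsP/existsP => [[t pe]|[t pe]].
- exists (rev_ord t); move: pe; rewrite lam_rev; last by rewrite -ltnS.
  by rewrite /=; have -> : n - t = n.+1 - t.+1 by [].
- exists (rev_ord t); rewrite lam_rev /=; last by rewrite -ltnS; have := ltn_ord t; lia.
  by have -> : n - (n.+1 - t.+1) = t by have := ltn_ord t; lia.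
Qed.

End Rev.

Theorem theorem5p1 (n : nat) (D : {set 'I_n}) :
  lattice_congruence (@weak_le n) (fun x y => eta D x = eta D y).
Proof.
split.
- by [].
- by move=> x y ->.
- by move=> x y z -> ->.
- exact: meet_compat.
- move=> x1 x2 y1 y2 j1 j2 e1 e2 [xj1 [xj2 ju1]] [yj1 [yj2 ju2]].
  rewrite -(eta_rev D j1) -(eta_rev D j2).
  have hm : forall a b j, weak_le a j -> weak_le b j ->
      (forall z, weak_le a z -> weak_le b z -> weak_le j z) ->
      is_meet (@weak_le n) (revp a) (revp b) (revp j).
    move=> a b j aj bj ju; split; first by rewrite -weak_le_rev.
    split; first by rewrite -weak_le_rev.
    move=> z za zb; rewrite -(revpK z) -weak_le_rev; apply: ju.
    + by rewrite weak_le_rev revpK.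
    + by rewrite weak_le_rev revpK.
  apply: (meet_compat (x1 := revp x1) (x2 := revp x2) (y1 := revp y1) (y2 := revp y2)).
  + by rewrite !eta_rev.
  + by rewrite !eta_rev.
  + exact: hm.
  + exact: hm.
Qed.
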